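(* Assume the synchronous bandit is unichain and strictly indexable (states labeled $\nu_1>\dots>\nu_d$), and let $\rho(\mathbf m)$ be the instantaneous bandit-averaged reward of WIP when the $N$-bandit system is in configuration $\mathbf m$. Then (i) for all $\mathbf m\in\Delta^d$, $$\rho(\mathbf m)=\sum_{i=1}^{s(\mathbf m)-1} m_i R^1_{i} + \Big(\alpha-\sum_{i=1}^{s(\mathbf m)-1}m_i\Big)R^1_{s(\mathbf m)} + \Big(\sum_{i=1}^{s(\mathbf m)}m_i - \alpha\Big)R^0_{s(\mathbf m)} + \sum_{i=s(\mathbf m)+1}^{d} m_i R^0_{i},$$ so $\rho$ is affine on each zone $\mathcal Z_i=\{\mathbf m: s(\mathbf m)=i\}$; and (ii) $\rho(\mathbf m^* )=V^{(1)}_{\mathrm{rel}}(\alpha)$, where $\mathbf m^*$ is the unique fixed point of $\phi$.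
   Context: Synchronous restless bandit model: $d\times d$ stochastic matrices $\mathbf P^0,\mathbf P^1$, rewards $\mathbf R^0,\mathbf R^1\in\mathbb R^d$, $\alpha\in(0,1)$; $N$ bandits with $\alpha N\in\mathbb N$ evolve independently given actions with $\mathbb P(S_n(t+1)=j\mid S_n(t)=i,a_n(t)=a)=P^a_{ij}$, reward $R^a_i$ per bandit per step. $V^{(1)}_{\mathrm{rel}}(\alpha)$ is the supremum over stationary Markov single-bandit policies of the long-run average expected reward subject to the long-run fraction of active time being $\alpha$. Unichain: under every policy a single bandit's states form one recurrent class. Indexability/Whittle index: the subsidy-$\nu$ problem is the single-bandit MDP where action $0$ in state $i$ earns $R^0_i+\nu$ and action $1$ earns $R^1_i$ (average reward); $\omega(\nu)$ the set of states where some optimal policy is passive; indexable if $\omega(\nu)\subseteq\omega(\nu')$ for $\nu\le\nu'$; $\nu_i=\inf\{\nu:i\in\omega(\nu)\}$; strictly indexable: distinct indices. WIP activates at each step the $\alpha N$ bandits with highest indices. $\Delta^d=\{\mathbf m\in[0,1]^d:\sum m_i=1\}$; configuration = vector of fractions of bandits in each state; $s(\mathbf m)$ the unique $s$ with $\sum_{i<s}m_i\le\alpha<\sum_{i\le s}m_i$; $\phi_j(\mathbf m)=\sum_{i=1}^{s(\mathbf m)-1} m_i P^1_{ij} + (\alpha-\sum_{i=1}^{s(\mathbf m)-1}m_i)P^1_{s(\mathbf m)j} + (\sum_{i=1}^{s(\mathbf m)}m_i - \alpha)P^0_{s(\mathbf m)j} + \sum_{i=s(\mathbf m)+1}^{d}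 m_i P^0_{ij}$, which has a unique fixed point $\mathbf m^*$ under these assumptions. *)

(* Defs.v *)
From HB Require Import structures.
From mathcomp Require Import all_boot all_order all_algebra.
From mathcomp Require Import all_classical all_reals all_analysis.
Set Implicit Arguments.
Unset Strict Implicit.
Unset Printing Implicit Defensive.
Import Order.TTheory GRing.Theory Num.Theory.
Import numFieldNormedType.Exports.
Local Open Scope classical_set_scope.
Local Open Scope ring_scope.

(* States of a single bandit are 'I_d, labelled 0,...,d-1 (paper: 1,...,d). *)

Section Bandit.
Variables (R : realType) (d : nat).

Definition stochastic (P : 'M[R]_d) : Prop :=
  (forall i j, 0 <= P i j) /\ (forall i, \sum_(j < d) P i j = 1).

Definition mpow (P : 'M[R]_d) (t : nat) : 'M[R]_d := iter t (mulmx P) 1%:M.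

(* A (possibly randomized) stationary Markov policy: pol i = probability of
   activating (action 1) in state i.  Deterministic policies take values in {0,1}. *)
Definition polP (P0 P1 : 'M[R]_d) (pol : 'I_d -> R) : 'M[R]_d :=
  \matrix_(i, j) (pol i * P1 i j + (1 - pol i) * P0 i j).
Definition polR (R0 R1 : 'I_d -> R) (pol : 'I_d -> R) : 'I_d -> R :=
  fun i => pol i * R1 i + (1 - pol i) * R0 i.

Definition longrun_avg (P : 'M[R]_d) (f : 'I_d -> R) (x : 'I_d) : R :=
  limn (fun T : nat =>
          (T.+1)%:R^-1 * \sum_(t < T.+1) \sum_(j < d) mpow P t x j * f j).

Definition irreducible (P : 'M[R]_d) : Prop :=
  forall i j : 'I_d, exists t : nat, 0 < mpow P t i j.

Definition bool_pol (pi : 'I_d -> bool) : 'I_d -> R := fun i => (pi i)%:R.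

(* Unichain: under every (stationary deterministic, hence also every stationary
   randomized) policy the states form one recurrent class. *)
Definition unichain (P0 P1 : 'M[R]_d) : Prop :=
  forall pi : 'I_d -> bool, irreducible (polP P0 P1 (bool_pol pi)).

Definition subsidy_gain (P0 P1 : 'M[R]_d) (R0 R1 : 'I_d -> R) (nu : R)
  (pi : 'I_d -> bool) (x : 'I_d) : R :=
  longrun_avg (polP P0 P1 (bool_pol pi))
              (polR (fun i => R0 i + nu) R1 (bool_pol pi)) x.

Definition subsidy_optimal (P0 P1 : 'M[R]_d) (R0 R1 : 'I_d -> R) (nu : R)
  (pi : 'I_d -> bool) : Prop :=
  forall (pi' : 'I_d -> bool) (x : 'I_d),
    subsidy_gain P0 P1 R0 R1 nu pi' x <= subsidy_gain P0 P1 R0 R1 nu pi x.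

Definition omega (P0 P1 : 'M[R]_d) (R0 R1 : 'I_d -> R) (nu : R) : set 'I_d :=
  [set i | exists pi, subsidy_optimal P0 P1 R0 R1 nu pi /\ pi i = false].

Definition indexable (P0 P1 : 'M[R]_d) (R0 R1 : 'I_d -> R) : Prop :=
  forall nu nu' : R, nu <= nu' -> omega P0 P1 R0 R1 nu `<=` omega P0 P1 R0 R1 nu'.

Definition whittle_index (P0 P1 : 'M[R]_d) (R0 R1 : 'I_d -> R) (i : 'I_d) : R :=
  inf [set nu : R | omega P0 P1 R0 R1 nu i].

Definition strictly_indexable (P0 P1 : 'M[R]_d) (R0 R1 : 'I_d -> R) : Prop :=
  indexable P0 P1 R0 R1 /\ injective (whittle_index P0 P1 R0 R1).

Definition valid_pol (pol : 'I_d -> R) : Prop := forall i, 0 <= pol i <= 1.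

Definition Vrel (P0 P1 : 'M[R]_d) (R0 R1 : 'I_d -> R) (alpha : R) : R :=
  sup [set g : R | exists (pol : 'I_d -> R) (x : 'I_d),
        [/\ valid_pol pol,
            (forall y, longrun_avg (polP P0 P1 pol) pol y = alpha) &
            g = longrun_avg (polP P0 P1 pol) (polR R0 R1 pol) x]].

Definition simplex (m : 'I_d -> R) : Prop :=
  (forall i, 0 <= m i) /\ \sum_(i < d) m i = 1.

Definition s_of (alpha : R) (m : 'I_d -> R) : option 'I_d :=
  [pick s : 'I_d | (\sum_(i < d | (i < s)%N) m i <= alpha)
                    && (alpha < \sum_(i < d | (i <= s)%N) m i)].

Definition rho_formula (R0 R1 : 'I_d -> R) (alpha : R) (m : 'I_d -> R) : R :=
  match s_of alpha m with
  | Some s =>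
      \sum_(i < d | (i < s)%N) m i * R1 i
      + (alpha - \sum_(i < d | (i < s)%N) m i) * R1 s
      + (\sum_(i < d | (i <= s)%N) m i - alpha) * R0 s
      + \sum_(i < d | (s < i)%N) m i * R0 i
  | None => 0
  end.

Definition phi (P0 P1 : 'M[R]_d) (alpha : R) (m : 'I_d -> R) : 'I_d -> R :=
  fun j =>
  match s_of alpha m with
  | Some s =>
      \sum_(i < d | (i < s)%N) m i * P1 i j
      + (alpha - \sum_(i < d | (i < s)%N) m i) * P1 s j
      + (\sum_(i < d | (i <= s)%N) m i - alpha) * P0 s j
      + \sum_(i < d | (s < i)%N) m i * P0 i j
  | None => 0
  end.

Definition config (N : nat) (S : 'I_N -> 'I_d) : 'I_d -> R :=
  fun i => #|[set n | S n == i]|%:R / N%:R.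

Definition wip_action (nu : 'I_d -> R) (N K : nat) (S : 'I_N -> 'I_d)
  (a : 'I_N -> bool) : Prop :=
  #|[set n | a n]| = K /\
  (forall n n' : 'I_N, a n -> ~~ a n' -> nu (S n') <= nu (S n)).

Definition inst_reward (R0 R1 : 'I_d -> R) (N : nat) (S : 'I_N -> 'I_d)
  (a : 'I_N -> bool) : R :=
  N%:R^-1 * \sum_(n < N) (if a n then R1 (S n) else R0 (S n)).

End Bandit.

(* Main.v *)
Require Import Defs.
From HB Require Import structures.
From mathcomp Require Import all_boot all_order all_algebra.
From mathcomp Require Import all_classical all_reals all_analysis.
From mathcomp Require Import ring lra.
Import Order.TTheory GRing.Theory Num.Theory.
Import numFieldNormedType.Exports.
Local Open Scope classical_set_scope.
Local Open Scope ring_scope.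

Section Helpers.
Variables (R : realType) (d : nat).
Implicit Types (P : 'M[R]_d).

Lemma mpowSr P t : mpow P t.+1 = mpow P t *m P.
Proof.
elim: t => [|t IH]; first by rewrite /mpow /= mul1mx mulmx1.
have -> : mpow P t.+2 = P *m mpow P t.+1 by [].
by rewrite {1}IH mulmxA.
Qed.

Lemma stochastic_mul (A B : 'M[R]_d) : stochastic A -> stochastic B -> stochastic (A *m B).
Proof.
rewrite /stochastic => -[A0 A1] [B0 B1]; split=> [i j|i].
  rewrite mxE; apply: sumr_ge0 => k _; exact: mulr_ge0.
under eq_bigr do rewrite mxE.
rewrite exchange_big /=.
rewrite -[RHS](A1 i); apply: eq_bigr => k _.
by rewrite -mulr_sumr B1 mulr1.
Qed.

Lemma stochastic1 : stochastic (1%:M : 'M[R]_d).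
Proof.
rewrite /stochastic; split=> [i j|i]; first by rewrite mxE; case: (i == j).
rewrite (bigD1 i) //= mxE eqxx big1 ?addr0 // => j Hj.
by rewrite mxE eq_sym (negbTE Hj).
Qed.

Lemma stochastic_mpow P t : stochastic P -> stochastic (mpow P t).
Proof.
move=> HP; elim: t => [|t IH]; first exact: stochastic1.
by rewrite /mpow /= -/(mpow P t); apply: stochastic_mul.
Qed.

Lemma stoch_entry_le1 P i j : stochastic P -> P i j <= 1.
Proof.
rewrite /stochastic => -[H0 H1]; rewrite -(H1 i) (bigD1 j) //= lerDl.
by apply: sumr_ge0 => k _.
Qed.

Lemma cesaro_poisson P (f h : 'I_d -> R) (g : R) :
  stochastic P ->
  (forall i, f i + \sum_(j < d) P i j * h j = g + h i) ->
  forall x, longrun_avg P f x = g.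
Proof.
move=> HP Hpois x.
pose a t := \sum_(j < d) mpow P t x j * h j.
have Hu : forall t, \sum_(j < d) mpow P t x j * f j = g + a t - a t.+1.
  move=> t.
  have -> : \sum_(j < d) mpow P t x j * f j =
     \sum_(j < d) mpow P t x j * (g + h j - \sum_(k < d) P j k * h k).
    apply: eq_bigr => j _; congr (_ * _).
    by rewrite -(Hpois j) addrK.
  rewrite /a mpowSr.
  under eq_bigr do rewrite !mulrDr mulrN.
  rewrite !big_split /= sumrN -mulr_suml (stochastic_mpow P t HP).2 mul1r.
  congr (_ + _ - _).
  rewrite (eq_bigr (fun i => \sum_(k < d) mpow P t x i * (P i k * h k))); last first.
    by move=> i _; rewrite mulr_sumr.
  rewrite exchange_big /=; apply: eq_bigr => k _.
  by rewrite mxE mulr_suml; apply: eq_bigr => j _; rewrite mulrA.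
pose H := \sum_(j < d) `|h j|.
have Ha : forall t, `|a t| <= H.
  move=> t; rewrite /a; apply: (le_trans (ler_norm_sum _ _ _)).
  apply: ler_sum => j _; rewrite normrM ler_piMl //.
  rewrite ger0_norm; [exact: stoch_entry_le1 (stochastic_mpow P t HP)|].
  exact: (stochastic_mpow P t HP).1.
have Hces : forall T : nat,
  (T.+1)%:R^-1 * \sum_(t < T.+1) \sum_(j < d) mpow P t x j * f j
   = g + (a 0%N - a T.+1) / (T.+1)%:R.
  move=> T; under eq_bigr do rewrite Hu.
  have -> : \sum_(t < T.+1) (g + a t - a t.+1) = T.+1%:R * g + (a 0%N - a T.+1).
    elim: T => [|T IH]; first by rewrite big_ord1 mul1r addrA.
    rewrite big_ord_recr /= IH -[T.+2%:R]natr1; ring.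
  rewrite mulrDr mulrA mulVf ?pnatr_eq0 // mul1r mulrC.
  by [].
rewrite /longrun_avg.
apply: cvg_lim => //.
apply/cvgrPdist_le => eps eps0.
have HH0 : 0 <= H by apply: sumr_ge0.
pose N := Num.trunc (2 * H / eps).
near=> T.
rewrite Hces opprD addNKr normrN normrM normfV (ger0_norm (ler0n _ T.+1)).
rewrite ler_pdivrMr ?ltr0n //.
apply: (le_trans (ler_normB _ _)).
apply: (le_trans (lerD (Ha _) (Ha _))).
have : 2 * H / eps < (T.+1)%:R.
  apply: (lt_le_trans (truncnS_gt _)); rewrite ler_nat ltnS.
  near: T; exact: nbhs_infty_ge.
rewrite ltr_pdivrMr // => /ltW.
move=> h2; rewrite mulrC; lra.
Unshelve. all: by end_near.
Qed.


Lemma exists_max (T : finType) (t0 : T) (F : T -> R) :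
  exists t, forall t', F t' <= F t.
Proof.
case: (@arg_maxP _ _ T t0 xpredT F isT) => t _ Ht.
by exists t => t'; exact: Ht.
Qed.

Lemma row_kernel (A : 'M[R]_d) (v : 'cV[R]_d) :
  v != 0 -> A *m v = 0 -> exists u : 'rV[R]_d, u != 0 /\ u *m A = 0.
Proof.
move=> v0 Av.
have nu : ~~ (A \in unitmx).
  apply/negP => uA; move/negP: v0; apply.
  by rewrite -(mulKmx uA v) Av mulmx0.
have : kermx A != 0 by rewrite kermx_eq0 row_free_unit.
case: (boolP [exists i, row i (kermx A) != 0]).
  move/existsP => [i Hi] _; exists (row i (kermx A)); split => //.
  by rewrite -row_mul mulmx_ker row0.
rewrite negb_exists => /forallP Hall /negP []; apply/eqP/row_matrixP => i.
by rewrite row0; apply/eqP; move: (Hall i); rewrite negbK.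
Qed.

Lemma row_solve (C : 'M[R]_d) :
  (forall x : 'rV[R]_d, x *m C = 0 -> x = 0) ->
  forall y : 'rV[R]_d, exists x, x *m C = y.
Proof.
move=> inj y.
have uC : C \in unitmx.
  rewrite -row_free_unit -kermx_eq0; apply/eqP/row_matrixP => i.
  by rewrite row0; apply: inj; rewrite -row_mul mulmx_ker row0.
by exists (y *m invmx C); rewrite -mulmxA mulVmx // mulmx1.
Qed.

Lemma mpow_stat P (mu : 'I_d -> R) :
  (forall j, \sum_(i < d) mu i * P i j = mu j) ->
  forall t j, \sum_(i < d) mu i * mpow P t i j = mu j.
Proof.
move=> Hmu; elim=> [|t IH] j.
  rewrite (bigD1 j) //= mxE eqxx mulr1 big1 ?addr0 // => i Hi.
  by rewrite mxE (negbTE Hi) mulr0.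
rewrite mpowSr.
under eq_bigr do rewrite mxE mulr_sumr.
rewrite exchange_big /= -(Hmu j); apply: eq_bigr => k _.
by rewrite -(IH k) mulr_suml; apply: eq_bigr => i _; rewrite mulrA.
Qed.

Lemma mpow_harm P (h : 'I_d -> R) :
  (forall i, \sum_(j < d) P i j * h j = h i) ->
  forall t i, \sum_(j < d) mpow P t i j * h j = h i.
Proof.
move=> Hh; elim=> [|t IH] i.
  rewrite (bigD1 i) //= mxE eqxx mul1r big1 ?addr0 // => j Hj.
  by rewrite mxE eq_sym (negbTE Hj) mul0r.
rewrite mpowSr.
under eq_bigr do rewrite mxE mulr_suml.
rewrite exchange_big /= -(IH i); apply: eq_bigr => k _.
by rewrite -(Hh k) mulr_sumr; apply: eq_bigr => j _; rewrite mulrA.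
Qed.

Lemma stationary_exists P :
  stochastic P -> irreducible P -> (0 < d)%N ->
  exists mu : 'I_d -> R, [/\ (forall i, 0 < mu i), \sum_(i < d) mu i = 1 &
     (forall j, \sum_(i < d) mu i * P i j = mu j)].
Proof.
move=> HP Hirr d0.
pose i0 : 'I_d := Ordinal d0.
have v0 : (const_mx 1 : 'cV[R]_d) != 0.
  apply/negP => /eqP/matrixP/(_ i0 ord0); rewrite !mxE => /eqP.
  by rewrite oner_eq0.
have Av : (1%:M - P) *m const_mx 1 = 0 :> 'cV[R]_d.
  apply/matrixP => i k; rewrite !mxE.
  under eq_bigr do rewrite !mxE mulr1.
  rewrite sumrB (bigD1 i) //= eqxx big1 ?addr0; last first.
    by move=> j /negbTE; rewrite eq_sym => ->.
  by rewrite HP.2 subrr.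
case: (row_kernel _ _ v0 Av) => u [u0 uA].
have Hu : forall j, \sum_(i < d) u 0 i * P i j = u 0 j.
  move=> j; move/matrixP: uA => /(_ 0 j); rewrite !mxE.
  under eq_bigr do rewrite !mxE mulrBr.
  rewrite sumrB (bigD1 j) //= eqxx mulr1 big1 ?addr0; last first.
    by move=> i /negbTE ->; rewrite mulr0.
  by move/eqP; rewrite subr_eq0 => /eqP <-.
pose w i := `|u 0 i|.
have Hw1 : forall j, w j <= \sum_(i < d) w i * P i j.
  move=> j; rewrite /w -Hu; apply: (le_trans (ler_norm_sum _ _ _)).
  by apply: ler_sum => i _; rewrite normrM (ger0_norm (HP.1 i j)).
have Hw : forall j, \sum_(i < d) w i * P i j = w j.
  have Hs : \sum_(j < d) (\sum_(i < d) w i * P i j - w j) = 0.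
    rewrite sumrB exchange_big /=.
    rewrite (eq_bigr (fun i => w i)) ?subrr // => i _.
    by rewrite -mulr_sumr HP.2 mulr1.
  move=> j; apply/eqP; rewrite -subr_eq0; apply/eqP.
  apply: (psumr_eq0P _ Hs) => // k _; rewrite subr_ge0; exact: Hw1.
have [k Hk] : exists k, u 0 k != 0.
  apply/existsP; apply: contraT => /existsPn Hall.
  rewrite -(negbTE u0); apply/eqP/matrixP => a b.
  by rewrite (ord1 a) mxE; apply/eqP; move: (Hall b); rewrite negbK.
pose S := \sum_(i < d) w i.
have S0 : 0 < S.
  rewrite /S (bigD1 k) //=; apply: ltr_pwDl; first by rewrite normr_gt0.
  by apply: sumr_ge0 => i _; exact: normr_ge0.
exists (fun i => w i / S); split.
- move=> j.
  have wk0 : 0 < w k by rewrite normr_gt0.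
  case: (Hirr k j) => t Ht.
  have := mpow_stat _ _ Hw t j.
  rewrite (bigD1 k) //= => <-; apply: divr_gt0 => //.
  apply: ltr_pwDl; first exact: mulr_gt0.
  apply: sumr_ge0 => i _; apply: mulr_ge0; first exact: normr_ge0.
  exact: (stochastic_mpow P t HP).1.
- by rewrite -mulr_suml mulfV // gt_eqF.
- move=> j; rewrite -(Hw j) [RHS]mulr_suml; apply: eq_bigr => i _.
  by rewrite mulrAC.
Qed.

Lemma harm_const P (h : 'I_d -> R) :
  stochastic P -> irreducible P ->
  (forall i, \sum_(j < d) P i j * h j = h i) ->
  forall i j, h i = h j.
Proof.
move=> HP Hirr Hh i1 j1.
case: (exists_max _ i1 h) => i0 Hi0.
suff all0 : forall j, h j = h i0 by rewrite !all0.
move=> j; case: (Hirr i0 j) => t Ht.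
have Hs : \sum_(l < d) mpow P t i0 l * (h i0 - h l) = 0.
  under eq_bigr do rewrite mulrBr.
  rewrite sumrB (mpow_harm _ _ Hh) -mulr_suml (stochastic_mpow P t HP).2 mul1r subrr //.
have Hnn : forall l, true -> 0 <= mpow P t i0 l * (h i0 - h l).
  move=> l _; apply: mulr_ge0; first exact: (stochastic_mpow P t HP).1.
  by rewrite subr_ge0.
have /eqP := @psumr_eq0P _ _ _ _ Hnn Hs j isT.
by rewrite mulf_eq0 (gt_eqF Ht) /= subr_eq0 => /eqP <-.
Qed.


Lemma poisson_exists P (mu : 'I_d -> R) (f : 'I_d -> R) :
  stochastic P -> irreducible P ->
  \sum_(i < d) mu i = 1 -> (forall j, \sum_(i < d) mu i * P i j = mu j) ->
  exists g h, forall i, f i + \sum_(j < d) P i j * h j = g + h i.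
Proof.
move=> HP Hirr Hmu1 Hmu.
pose C : 'M[R]_d := \matrix_(j, i) ((i == j)%:R - P i j + mu j).
have HC : forall (x : 'rV[R]_d) i,
    (x *m C) 0 i = x 0 i - \sum_(j < d) P i j * x 0 j + \sum_(j < d) mu j * x 0 j.
  move=> x i; rewrite mxE.
  under eq_bigr do rewrite mxE !mulrDr mulrN.
  rewrite !big_split /= sumrN (bigD1 i) //= eqxx mulr1 big1 ?addr0; last first.
    by move=> j /negbTE; rewrite eq_sym => ->; rewrite mulr0.
  by congr (_ - _ + _); apply: eq_bigr => j _; rewrite mulrC.
have inj : forall x : 'rV[R]_d, x *m C = 0 -> x = 0.
  move=> x Hx.
  have Hx' : forall i, x 0 i - \sum_(j < d) P i j * x 0 j + \sum_(j < d) mu j * x 0 j = 0.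
    by move=> i; rewrite -HC Hx mxE.
  pose c := \sum_(j < d) mu j * x 0 j.
  have c0 : c = 0.
    have : \sum_(i < d) mu i * (x 0 i - \sum_(j < d) P i j * x 0 j + c) = 0.
      by apply: big1 => i _; rewrite Hx' mulr0.
    under eq_bigr do rewrite !mulrDr mulrN.
    rewrite !big_split /= sumrN -mulr_suml Hmu1 mul1r.
    have -> : \sum_(i < d) mu i * \sum_(j < d) P i j * x 0 j = c.
      under eq_bigr do rewrite mulr_sumr.
      rewrite exchange_big /=; apply: eq_bigr => j _.
      by rewrite -(Hmu j) mulr_suml; apply: eq_bigr => i _; rewrite mulrA.
    by rewrite -/c subrr add0r.
  have Hh : forall i, \sum_(j < d) P i j * x 0 j = x 0 i.
    move=> i; move: (Hx' i); rewrite -/c c0 addr0 => /eqP; rewrite subr_eq0.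
    by move/eqP.
  have Hc := harm_const _ _ HP Hirr Hh.
  apply/matrixP => a i; rewrite (ord1 a) mxE.
  move: c0; rewrite /c (eq_bigr (fun j => mu j * x 0 i)); last first.
    by move=> j _; rewrite (Hc j i).
  by rewrite -mulr_suml Hmu1 mul1r.
case: (row_solve _ inj (\row_i f i)) => x Hx.
exists (\sum_(j < d) mu j * x 0 j), (fun i => x 0 i) => i.
move/matrixP: Hx => /(_ 0 i); rewrite HC mxE => <-.
by rewrite addrAC subrK addrC.
Qed.

Lemma gain_stat P (mu : 'I_d -> R) (f : 'I_d -> R) :
  stochastic P -> irreducible P ->
  \sum_(i < d) mu i = 1 -> (forall j, \sum_(i < d) mu i * P i j = mu j) ->
  forall x, longrun_avg P f x = \sum_(i < d) mu i * f i.
Proof.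
move=> HP Hirr Hmu1 Hmu x.
case: (poisson_exists _ _ f HP Hirr Hmu1 Hmu) => g [h Hgh].
rewrite (cesaro_poisson _ _ _ _ HP Hgh).
have : \sum_(i < d) mu i * (f i + \sum_(j < d) P i j * h j)
       = \sum_(i < d) mu i * (g + h i) by apply: eq_bigr => i _; rewrite Hgh.
under eq_bigr do rewrite mulrDr.
rewrite big_split /=.
under [in RHS]eq_bigr do rewrite mulrDr.
rewrite big_split /= -mulr_suml Hmu1 mul1r.
have -> : \sum_(i < d) mu i * \sum_(j < d) P i j * h j = \sum_(j < d) mu j * h j.
  under eq_bigr do rewrite mulr_sumr.
  rewrite exchange_big /=; apply: eq_bigr => j _.
  by rewrite -(Hmu j) mulr_suml; apply: eq_bigr => i _; rewrite mulrA.
by move/addIr.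
Qed.

End Helpers.
Arguments mpowSr {R d}. Arguments stochastic_mpow {R d}. Arguments stoch_entry_le1 {R d}.
Arguments cesaro_poisson {R d}. Arguments exists_max {R}. Arguments row_kernel {R d}.
Arguments row_solve {R d}. Arguments mpow_stat {R d}. Arguments mpow_harm {R d}.
Arguments stationary_exists {R d}. Arguments harm_const {R d}. Arguments poisson_exists {R d}.
Arguments gain_stat {R d}. Arguments stochastic_mul {R d}.

Set Implicit Arguments. Unset Strict Implicit.

Section MDP.
Variables (R : realType) (d : nat) (P0 P1 : 'M[R]_d) (R0 R1 : 'I_d -> R).
Hypotheses (HP0 : stochastic P0) (HP1 : stochastic P1)
  (Huni : unichain P0 P1) (d0 : (0 < d)%N).
Implicit Types (pi : 'I_d -> bool) (pol mu h f : 'I_d -> R) (nu : R).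

Definition Pa (a : bool) := if a then P1 else P0.
Definition rsub (nu : R) (a : bool) (i : 'I_d) := if a then R1 i else R0 i + nu.
Definition Qv (h : 'I_d -> R) nu i a := rsub nu a i + \sum_(j < d) Pa a i j * h j.
Definition i0 : 'I_d := Ordinal d0.
Definition Gain nu pi := subsidy_gain P0 P1 R0 R1 nu pi i0.

Lemma polP_bool pi i j : polP P0 P1 (bool_pol R pi) i j = Pa (pi i) i j.
Proof. by rewrite mxE /bool_pol /Pa; case: (pi i) => /=; ring. Qed.

Lemma polR_bool nu pi i :
  polR (fun i => R0 i + nu) R1 (bool_pol R pi) i = rsub nu (pi i) i.
Proof. by rewrite /polR /bool_pol /rsub; case: (pi i) => /=; ring. Qed.

Lemma valid_bool pi : valid_pol (bool_pol R pi).
Proof. by move=> i; rewrite /bool_pol; case: (pi i); rewrite /= ?ler01 ?lexx. Qed.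

Lemma stoch_pol pol : valid_pol pol -> stochastic (polP P0 P1 pol).
Proof.
move=> Hv; split=> [i j|i].
  rewrite mxE; case/andP: (Hv i) => h0 h1.
  apply: addr_ge0; apply: mulr_ge0 => //; try by rewrite subr_ge0.
  exact: HP1.1. exact: HP0.1.
under eq_bigr do rewrite mxE.
rewrite big_split /= -!mulr_sumr HP1.2 HP0.2; ring.
Qed.

Lemma sum_pos_exists (F : 'I_d -> R) : 0 < \sum_(i < d) F i -> exists k, 0 < F k.
Proof.
move=> H; apply/not_existsP => Hn.
have : \sum_(i < d) F i <= 0.
  by apply: sumr_le0 => i _; rewrite leNgt; apply/negP => Hi; apply: (Hn i).
by rewrite leNgt H.
Qed.

Lemma irr_pol pol : valid_pol pol -> irreducible (polP P0 P1 pol).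
Proof.
move=> Hv.
pose pi i := (0 < pol i).
have Hirr := Huni pi.
have Hsp : forall i j, 0 < polP P0 P1 (bool_pol R pi) i j -> 0 < polP P0 P1 pol i j.
  move=> i j; rewrite polP_bool mxE /Pa /pi.
  case/andP: (Hv i) => h0 h1.
  case: (boolP (0 < pol i)) => Hp /= H.
    apply: ltr_pwDl; first exact: mulr_gt0 Hp H.
    by apply: mulr_ge0; [rewrite subr_ge0|exact: HP0.1].
  have -> : pol i = 0 by apply/le_anti; rewrite h0 andbT leNgt.
  by rewrite mul0r add0r subr0 mul1r.
have Hstp := stoch_pol Hv.
have Hstb := stoch_pol (valid_bool pi).
have Hm : forall t i j, 0 < mpow (polP P0 P1 (bool_pol R pi)) t i j ->
                        0 < mpow (polP P0 P1 pol) t i j.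
  elim=> [|t IH] i j; first by [].
  rewrite /mpow /= -!/(mpow _ t) !mxE => /sum_pos_exists [k Hk].
  have Hk1 : 0 < polP P0 P1 (bool_pol R pi) i k.
    rewrite lt_def; apply/andP; split; last exact: Hstb.1.
    by apply/eqP => H0; move: Hk; rewrite H0 mul0r ltxx.
  have Hk2 : 0 < mpow (polP P0 P1 (bool_pol R pi)) t k j.
    rewrite lt_def; apply/andP; split; last exact: (stochastic_mpow _ _ Hstb).1.
    by apply/eqP => H0; move: Hk; rewrite H0 mulr0 ltxx.
  rewrite (bigD1 k) //=; apply: ltr_pwDl; first exact: mulr_gt0 (Hsp _ _ Hk1) (IH _ _ Hk2).
  apply: sumr_ge0 => l _; apply: mulr_ge0; first exact: Hstp.1.
  exact: (stochastic_mpow _ _ Hstp).1.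
move=> i j; case: (Hirr i j) => t Ht; exists t; exact: Hm.
Qed.

Lemma pol_stat pol : valid_pol pol -> exists mu : 'I_d -> R,
  [/\ (forall i, 0 < mu i), \sum_(i < d) mu i = 1 &
     (forall j, \sum_(i < d) mu i * polP P0 P1 pol i j = mu j)].
Proof. move=> Hv; exact: stationary_exists _ (stoch_pol Hv) (irr_pol Hv) d0. Qed.

Lemma pol_gain pol mu f : valid_pol pol -> \sum_(i < d) mu i = 1 ->
  (forall j, \sum_(i < d) mu i * polP P0 P1 pol i j = mu j) ->
  forall x, longrun_avg (polP P0 P1 pol) f x = \sum_(i < d) mu i * f i.
Proof. move=> Hv; exact: gain_stat _ _ _ (stoch_pol Hv) (irr_pol Hv). Qed.

Lemma Gain_stat nu pi mu : \sum_(i < d) mu i = 1 ->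
  (forall j, \sum_(i < d) mu i * polP P0 P1 (bool_pol R pi) i j = mu j) ->
  forall x, subsidy_gain P0 P1 R0 R1 nu pi x = \sum_(i < d) mu i * rsub nu (pi i) i.
Proof.
move=> H1 H2 x; rewrite /subsidy_gain (pol_gain _ (valid_bool pi) H1 H2).
by apply: eq_bigr => i _; rewrite polR_bool.
Qed.

Lemma Gain_x nu pi x : subsidy_gain P0 P1 R0 R1 nu pi x = Gain nu pi.
Proof.
case: (pol_stat (valid_bool pi)) => mu [_ H1 H2].
by rewrite /Gain !(Gain_stat _ H1 H2).
Qed.

Lemma opt_iff nu pi : subsidy_optimal P0 P1 R0 R1 nu pi <->
  forall pi', Gain nu pi' <= Gain nu pi.
Proof.
split=> H.
  by move=> pi'; apply: H.
by move=> pi' x; rewrite !Gain_x.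
Qed.

Lemma Gain_ext nu pi pi' : pi =1 pi' -> Gain nu pi = Gain nu pi'.
Proof. by move=> /funext ->. Qed.

Lemma exists_opt nu : exists pi, subsidy_optimal P0 P1 R0 R1 nu pi.
Proof.
case: (exists_max _ [ffun _ : 'I_d => false] (fun f : {ffun 'I_d -> bool} => Gain nu f)) => f Hf.
exists f; apply/opt_iff => pi'.
have := Hf [ffun i => pi' i].
by rewrite (@Gain_ext nu [ffun i => pi' i] pi') // => i; rewrite ffunE.
Qed.

Lemma Gain_affine pi : exists mu : 'I_d -> R,
  [/\ (forall i, 0 < mu i), \sum_(i < d) mu i = 1 &
   forall nu, Gain nu pi = \sum_(i < d) mu i * rsub 0 (pi i) i
                           + nu * \sum_(i < d) mu i * (~~ pi i)%:R].
Proof.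
case: (pol_stat (valid_bool pi)) => mu [Hp H1 H2].
exists mu; split => // nu; rewrite /Gain (Gain_stat _ H1 H2) mulr_sumr -big_split /=.
apply: eq_bigr => i _; rewrite /rsub; case: (pi i) => /=; ring.
Qed.

Lemma avg_Q pi mu h nu : \sum_(i < d) mu i = 1 ->
  (forall j, \sum_(i < d) mu i * polP P0 P1 (bool_pol R pi) i j = mu j) ->
  Gain nu pi = \sum_(i < d) mu i * Qv h nu i (pi i) - \sum_(i < d) mu i * h i.
Proof.
move=> H1 H2; rewrite /Gain (Gain_stat _ H1 H2).
rewrite /Qv; under [in RHS]eq_bigr do rewrite mulrDr.
rewrite big_split /=.
have -> : \sum_(i < d) mu i * \sum_(j < d) Pa (pi i) i j * h j = \sum_(j < d) mu j * h j.
  under eq_bigr do rewrite mulr_sumr.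
  rewrite exchange_big /=; apply: eq_bigr => j _.
  rewrite -(H2 j) mulr_suml; apply: eq_bigr => i _.
  by rewrite polP_bool mulrA.
by rewrite addrK.
Qed.


Lemma bellman nu pis : subsidy_optimal P0 P1 R0 R1 nu pis ->
  exists g h, [/\ (forall i a, Qv h nu i a <= g + h i),
                  (forall i, Qv h nu i (pis i) = g + h i) & Gain nu pis = g].
Proof.
move=> Hopt.
case: (pol_stat (valid_bool pis)) => mu [Hmp Hm1 Hms].
case: (poisson_exists _ _ (fun i => rsub nu (pis i) i)
         (stoch_pol (valid_bool pis)) (irr_pol (valid_bool pis)) Hm1 Hms) => g [h Hgh].
have HQ : forall i, Qv h nu i (pis i) = g + h i.
  move=> i; rewrite /Qv -Hgh; congr (_ + _); apply: eq_bigr => j _.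
  by rewrite polP_bool.
have HG : Gain nu pis = g.
  rewrite (avg_Q h nu Hm1 Hms).
  under eq_bigr do rewrite HQ mulrDr.
  by rewrite big_split /= -mulr_suml Hm1 mul1r addrK.
exists g, h; split => // i1 a1.
case: (leP (Qv h nu i1 a1) (g + h i1)) => // Hlt.
exfalso.
pose pi' i := if i == i1 then a1 else pis i.
case: (pol_stat (valid_bool pi')) => mu' [Hmp' Hm1' Hms'].
have Hge : forall i, g + h i <= Qv h nu i (pi' i).
  move=> i; rewrite /pi'; case: eqP => [->|_]; first exact: ltW.
  by rewrite HQ.
have : g < Gain nu pi'.
  rewrite (avg_Q h nu Hm1' Hms') ltrBrDr.
  have -> : g + \sum_(i < d) mu' i * h i = \sum_(i < d) mu' i * (g + h i).
    under [in RHS]eq_bigr do rewrite mulrDr.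
    by rewrite big_split /= -mulr_suml Hm1' mul1r.
  rewrite [X in X < _](bigD1 i1) //= [X in _ < X](bigD1 i1) //=.
  apply: ltr_leD.
    by rewrite ltr_pM2l // /pi' eqxx.
  by apply: ler_sum => i _; rewrite ler_pM2l.
have := (proj1 (opt_iff nu pis) Hopt pi').
by rewrite HG => /le_lt_trans H /H; rewrite ltxx.
Qed.

Lemma opt_conserving nu pis g h pi :
  (forall i a, Qv h nu i a <= g + h i) -> Gain nu pis = g ->
  subsidy_optimal P0 P1 R0 R1 nu pis ->
  subsidy_optimal P0 P1 R0 R1 nu pi -> forall i, Qv h nu i (pi i) = g + h i.
Proof.
move=> HQ HG Hopt Hpi.
have Heq : Gain nu pi = g.
  apply/le_anti; rewrite -HG; apply/andP; split.
    exact: (proj1 (opt_iff _ _) Hopt).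
  exact: (proj1 (opt_iff _ _) Hpi).
case: (pol_stat (valid_bool pi)) => mu [Hmp Hm1 Hms].
have Hs : \sum_(i < d) mu i * (g + h i - Qv h nu i (pi i)) = 0.
  rewrite (eq_bigr (fun i => mu i * g + (mu i * h i - mu i * Qv h nu i (pi i)))); last first.
    by move=> i _; ring.
  rewrite big_split /= sumrB -mulr_suml Hm1 mul1r.
  have := avg_Q h nu Hm1 Hms; rewrite Heq => ->.
  ring.
have Hnn : forall i, true -> 0 <= mu i * (g + h i - Qv h nu i (pi i)).
  by move=> i _; apply: mulr_ge0; [exact: ltW|rewrite subr_ge0].
move=> i; have /eqP := @psumr_eq0P _ _ _ _ Hnn Hs i isT.
by rewrite mulf_eq0 (gt_eqF (Hmp i)) /= subr_eq0 => /eqP ->.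
Qed.

Lemma pol_Q_identity h nu pol i :
  polR (fun i => R0 i + nu) R1 pol i + \sum_(j < d) polP P0 P1 pol i j * h j
  = pol i * Qv h nu i true + (1 - pol i) * Qv h nu i false.
Proof.
rewrite /polR /Qv /rsub /Pa.
under eq_bigr do rewrite mxE mulrDl -!mulrA.
rewrite big_split /= -!mulr_sumr; ring.
Qed.

Lemma duality nu g h pol mu :
  (forall i a, Qv h nu i a <= g + h i) -> valid_pol pol ->
  \sum_(i < d) mu i = 1 -> (forall i, 0 <= mu i) ->
  (forall j, \sum_(i < d) mu i * polP P0 P1 pol i j = mu j) ->
  \sum_(i < d) mu i * polR (fun i => R0 i + nu) R1 pol i <= g /\
  ((forall i, (pol i != 0 -> Qv h nu i true = g + h i) /\
              (pol i != 1 -> Qv h nu i false = g + h i)) ->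
   \sum_(i < d) mu i * polR (fun i => R0 i + nu) R1 pol i = g).
Proof.
move=> HQ Hv Hm1 Hm0 Hms.
have Hsh : \sum_(i < d) mu i * \sum_(j < d) polP P0 P1 pol i j * h j
           = \sum_(j < d) mu j * h j.
  under eq_bigr do rewrite mulr_sumr.
  rewrite exchange_big /=; apply: eq_bigr => j _.
  rewrite -(Hms j) mulr_suml; apply: eq_bigr => i _; by rewrite mulrA.
have Hg : \sum_(i < d) mu i * (g + h i) = g + \sum_(i < d) mu i * h i.
  by under eq_bigr do rewrite mulrDr; rewrite big_split /= -mulr_suml Hm1 mul1r.
have Hkey : \sum_(i < d) mu i * polR (fun i => R0 i + nu) R1 pol i
   = \sum_(i < d) mu i * (pol i * Qv h nu i true + (1 - pol i) * Qv h nu i false)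
     - \sum_(j < d) mu j * h j.
  rewrite -Hsh -sumrB; apply: eq_bigr => i _.
  by rewrite -pol_Q_identity; ring.
split.
  rewrite Hkey lerBlDr -Hg; apply: ler_sum => i _; apply: ler_wpM2l => //.
  case/andP: (Hv i) => h0 h1.
  have -> : g + h i = pol i * (g + h i) + (1 - pol i) * (g + h i) by ring.
  apply: lerD; apply: ler_wpM2l => //; by rewrite subr_ge0.
move=> Hc; rewrite Hkey; apply/eqP; rewrite subr_eq -Hg; apply/eqP; apply: eq_bigr => i _; congr (_ * _).
case: (Hc i) => Ht Hf.
case: (boolP (pol i == 0)) => [/eqP Hp0|p0].
  by rewrite Hf ?Hp0 ?subr0 ?mul0r ?mul1r ?add0r // eq_sym oner_eq0.
case: (boolP (pol i == 1)) => [/eqP Hp1|p1].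
  by rewrite Ht ?Hp1 ?subrr ?mul0r ?mul1r ?addr0 // oner_eq0.
rewrite Ht // Hf //; ring.
Qed.


Lemma Gain_ffun nu pi : Gain nu [ffun j => pi j] = Gain nu pi.
Proof. by apply: Gain_ext => j; rewrite ffunE. Qed.

Lemma opt_ffun nu pi :
  (forall f : {ffun 'I_d -> bool}, Gain nu f <= Gain nu pi) ->
  subsidy_optimal P0 P1 R0 R1 nu pi.
Proof. by move=> H; apply/opt_iff => pi'; rewrite -Gain_ffun. Qed.

Lemma sum_split_bool mu pi :
  \sum_(i < d) mu i * (~~ pi i)%:R + \sum_(i < d) mu i * (pi i)%:R = \sum_(i < d) mu i.
Proof. by rewrite -big_split /=; apply: eq_bigr => i _; case: (pi i) => /=; ring. Qed.

Lemma sum_ge_one mu (pi : 'I_d -> bool) j : (forall i, 0 < mu i) -> pi j ->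
  mu j <= \sum_(i < d) mu i * (pi i)%:R.
Proof.
move=> Hp Hj; rewrite (bigD1 j) //= Hj mulr1 lerDl.
by apply: sumr_ge0 => i _; apply: mulr_ge0; [exact: ltW|exact: ler0n].
Qed.

Lemma omega_ne i : exists nu, omega P0 P1 R0 R1 nu i.
Proof.
pose pz := fun _ : 'I_d => false.
case: (Gain_affine pz) => mu0 [Hp0 H10 HG0].
have Hev : \forall nu \near +oo, forall f : {ffun 'I_d -> bool}, Gain nu f <= Gain nu pz.
  apply: filter_forall => f.
  case: (Gain_affine f) => mu [Hp H1 HG].
  case: (boolP [exists j, f j]) => [/existsP [j Hj] | Hn]; last first.
    apply: nearW => nu; rewrite (@Gain_ext nu f pz) // => j.
    by move/existsPn: Hn => /(_ j) /negbTE.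
  set a := \sum_(i < d) mu i * rsub 0 (f i) i.
  set b := \sum_(i < d) mu i * (~~ f i)%:R.
  set a0 := \sum_(i < d) mu0 i * rsub 0 (pz i) i.
  have Hb0 : \sum_(i < d) mu0 i * (~~ pz i)%:R = 1.
    rewrite -[RHS]H10; apply: eq_bigr => k _; rewrite /pz /=; ring.
  have b1 : 0 < 1 - b.
    have := sum_split_bool mu f; rewrite H1 -/b => Hs.
    have := sum_ge_one Hp Hj; have := Hp j; lra.
  near=> nu.
  rewrite HG HG0 Hb0 mulr1 -/a -/b -/a0.
  have : (a - a0) / (1 - b) <= nu by near: nu; apply: nbhs_pinfty_ge; exact: num_real.
  rewrite ler_pdivrMr // => Hn; nra.
case: (filter_ex Hev) => nu Hnu.
by exists nu, pz; split => //; apply: opt_ffun.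
Unshelve. all: by end_near.
Qed.

Lemma omega_lb i : exists L, forall nu, omega P0 P1 R0 R1 nu i -> L <= nu.
Proof.
pose p1 := fun _ : 'I_d => true.
case: (Gain_affine p1) => mu1 [Hp1 H11 HG1].
have Hev : \forall nu \near -oo, forall f : {ffun 'I_d -> bool},
    (exists j, f j = false) -> Gain nu f < Gain nu p1.
  apply: filter_forall => f.
  case: (Gain_affine f) => mu [Hp H1 HG].
  case: (boolP [exists j, ~~ f j]) => [/existsP [j Hj] | Hn]; last first.
    apply: nearW => nu [j Hj]; move/existsPn: Hn => /(_ j); by rewrite Hj.
  set a := \sum_(i < d) mu i * rsub 0 (f i) i.
  set b := \sum_(i < d) mu i * (~~ f i)%:R.
  set a1 := \sum_(i < d) mu1 i * rsub 0 (p1 i) i.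
  have Hb0 : \sum_(i < d) mu1 i * (~~ p1 i)%:R = 0.
    by apply: big1 => k _; rewrite /p1 /=; ring.
  have b0 : 0 < b.
    exact: lt_le_trans (Hp j) (sum_ge_one (pi := fun i => ~~ f i) Hp Hj).
  near=> nu => _.
  rewrite HG HG1 Hb0 mulr0 addr0 -/a -/b -/a1.
  have : nu < (a1 - a) / b by near: nu; apply: nbhs_ninfty_lt; exact: num_real.
  rewrite ltr_pdivlMr // => Hn; nra.
case: Hev => M [_ HM].
exists M => nu [pi [Hopt Hpi]].
rewrite leNgt; apply/negP => Hlt.
have := HM nu Hlt [ffun j => pi j]; rewrite Gain_ffun => /(_ (ex_intro _ i _)).
rewrite ffunE Hpi => /(_ erefl).
have := proj1 (opt_iff _ _) Hopt p1.
by move=> /le_lt_trans H /H; rewrite ltxx.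
Unshelve. all: by end_near.
Qed.

Lemma W_lt nu i : nu < whittle_index P0 P1 R0 R1 i -> ~ omega P0 P1 R0 R1 nu i.
Proof.
move=> Hlt Hom.
have Hlb : has_lbound [set nu | omega P0 P1 R0 R1 nu i].
  by case: (omega_lb i) => L HL; exists L => y; exact: HL.
have := ge_inf Hlb Hom; rewrite -/(whittle_index P0 P1 R0 R1 i).
by rewrite leNgt Hlt.
Qed.

Lemma W_gt nu i : indexable P0 P1 R0 R1 ->
  whittle_index P0 P1 R0 R1 i < nu -> omega P0 P1 R0 R1 nu i.
Proof.
move=> Hind Hlt.
have Hne : [set nu | omega P0 P1 R0 R1 nu i] !=set0.
  by case: (omega_ne i) => nu' H; exists nu'.
case: (inf_lt Hne Hlt) => y Hy Hyn.
exact: (Hind y nu (ltW Hyn) i Hy).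
Qed.

Lemma closure nu0 s b :
  (forall e, 0 < e -> exists nu, `|nu0 - nu| < e /\
      exists pi, subsidy_optimal P0 P1 R0 R1 nu pi /\ pi s = b) ->
  exists pi, subsidy_optimal P0 P1 R0 R1 nu0 pi /\ pi s = b.
Proof.
move=> Hyp.
case: (pselect (exists pi, subsidy_optimal P0 P1 R0 R1 nu0 pi /\ pi s = b)) => // Hno.
case: (exists_opt nu0) => pis Hopt.
have Hev : \forall nu \near nu0, forall f : {ffun 'I_d -> bool},
    f s = b -> Gain nu f < Gain nu pis.
  apply: (@filter_forall _ _ _ _ (nbhs_filter nu0)) => f.
  case: (boolP (f s == b)) => [/eqP Hfs | Hfs]; last first.
    by apply: nearW => nu Hf; move: Hfs; rewrite Hf eqxx.
  have Hlt0 : Gain nu0 f < Gain nu0 pis.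
    case: (ltP (Gain nu0 f) (Gain nu0 pis)) => // Hle.
    exfalso; apply: Hno; exists f; split => //; apply/opt_iff => pi'.
    exact: le_trans (proj1 (opt_iff _ _) Hopt pi') Hle.
  case: (Gain_affine f) => mu [_ _ HGf].
  case: (Gain_affine pis) => mu' [_ _ HGp].
  set D := Gain nu0 pis - Gain nu0 f.
  set c := \sum_(i < d) mu' i * (~~ pis i)%:R - \sum_(i < d) mu i * (~~ f i)%:R.
  have HD : forall nu, Gain nu pis - Gain nu f = D + (nu - nu0) * c.
    by move=> nu; rewrite /D /c !HGf !HGp; ring.
  have D0 : 0 < D by rewrite /D subr_gt0.
  apply/nbhs_ballP; exists (D / (`|c| + 1)).
    by apply: divr_gt0 => //; apply: ltr_wpDl => //; exact: normr_ge0.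
  move=> nu; rewrite -ball_normE /= => Hb _.
  rewrite -subr_gt0 HD.
  have c1 : 0 < `|c| + 1 by apply: ltr_wpDl => //; exact: normr_ge0.
  move: Hb; rewrite ltr_pdivlMr // => Hb.
  have h1 : - (`|nu0 - nu| * `|c|) <= (nu - nu0) * c.
    rewrite distrC -normrM; move: (lexx `|(nu - nu0) * c|); rewrite ler_norml; by case/andP.
  have h2 : `|nu0 - nu| * `|c| <= `|nu0 - nu| * (`|c| + 1).
    by apply: ler_wpM2l; [exact: normr_ge0|rewrite lerDl].
  lra.
case: ((nbhs_ballP nu0 _).1 Hev) => e e0 Hball.
case: (Hyp e e0) => nu [Hnu [pi [Hpi Hpis]]].
have := Hball nu; rewrite -ball_normE /= => /(_ Hnu [ffun j => pi j]).
rewrite ffunE Gain_ffun => /(_ Hpis).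
have := proj1 (opt_iff _ _) Hpi pis.
by move=> /le_lt_trans H /H; rewrite ltxx.
Qed.


Lemma at_index (s : 'I_d) :
  indexable P0 P1 R0 R1 ->
  (forall i j : 'I_d, (i < j)%N ->
     whittle_index P0 P1 R0 R1 j < whittle_index P0 P1 R0 R1 i) ->
  exists g h,
  [/\ (forall i a, Qv h (whittle_index P0 P1 R0 R1 s) i a <= g + h i),
      (forall i : 'I_d, (i <= s)%N -> Qv h (whittle_index P0 P1 R0 R1 s) i true = g + h i) &
      (forall i : 'I_d, (s <= i)%N -> Qv h (whittle_index P0 P1 R0 R1 s) i false = g + h i)].
Proof.
move=> Hind Hord.
set nu0 := whittle_index P0 P1 R0 R1 s.
case: (exists_opt nu0) => pis Hopt.
case: (bellman Hopt) => g [h [HQ Hc HG]].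
have Hcons : forall pi, subsidy_optimal P0 P1 R0 R1 nu0 pi ->
    forall i, Qv h nu0 i (pi i) = g + h i.
  by move=> pi Hpi; apply: (opt_conserving HQ HG Hopt Hpi).
exists g, h; split => //.
- move=> i; rewrite leq_eqVlt => /orP [/eqP Hi | Hi].
    have -> : i = s by apply: val_inj.
    case: (@closure nu0 s true) => [e e0|pi [Hpi Hs]]; last first.
      by rewrite -Hs; apply: Hcons.
    exists (nu0 - e / 2); split.
      by rewrite opprB addrC subrK ger0_norm ?divr_ge0 ?ltW //; lra.
    have Hn : ~ omega P0 P1 R0 R1 (nu0 - e / 2) s by apply: W_lt; rewrite /nu0; lra.
    case: (exists_opt (nu0 - e / 2)) => pi Hpi; exists pi; split => //.
    case E: (pi s) => //; exfalso; apply: Hn; by exists pi.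
  have Hn : ~ omega P0 P1 R0 R1 nu0 i by apply: W_lt; exact: Hord.
  have Hp : pis i = true.
    case E: (pis i) => //; exfalso; apply: Hn; by exists pis.
  by rewrite -Hp; apply: Hc.
- move=> i; rewrite leq_eqVlt => /orP [/eqP Hi | Hi].
    have -> : i = s by apply: val_inj.
    case: (@closure nu0 s false) => [e e0|pi [Hpi Hs]]; last first.
      by rewrite -Hs; apply: Hcons.
    exists (nu0 + e / 2); split.
      by rewrite opprD addrA subrr sub0r normrN ger0_norm ?divr_ge0 ?ltW //; lra.
    have Ho : omega P0 P1 R0 R1 (nu0 + e / 2) s by apply: W_gt => //; rewrite /nu0; lra.
    by case: Ho => pi [Hpi Hs]; exists pi.
  have Ho : omega P0 P1 R0 R1 nu0 i by apply: W_gt => //; exact: Hord.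
  by case: Ho => pi [Hpi Hs]; rewrite -Hs; apply: Hcons.
Qed.

End MDP.

Section Fin.
Variables (R : realType) (d : nat).

Lemma split_le (s : 'I_d) (F : 'I_d -> R) :
  \sum_(i < d | (i <= s)%N) F i = \sum_(i < d | (i < s)%N) F i + F s.
Proof.
rewrite (bigID (fun i : 'I_d => (i < s)%N)) /=; congr (_ + _).
  by apply: eq_bigl => i; rewrite andb_idl // => /ltnW.
apply: big_pred1 => i /=.
rewrite -leqNgt -eqn_leq; by [].
Qed.

Lemma split_all (s : 'I_d) (F : 'I_d -> R) :
  \sum_(i < d) F i = \sum_(i < d | (i < s)%N) F i + F s + \sum_(i < d | (s < i)%N) F i.
Proof.
rewrite (bigID (fun i : 'I_d => (i <= s)%N)) /= split_le; congr (_ + _).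
by apply: eq_bigl => i; rewrite ltnNge.
Qed.

Lemma s_of_spec (alpha : R) (m : 'I_d -> R) :
  simplex m -> 0 <= alpha -> alpha < 1 ->
  exists s, [/\ s_of alpha m = Some s,
     \sum_(i < d | (i < s)%N) m i <= alpha & alpha < \sum_(i < d | (i <= s)%N) m i].
Proof.
move=> [Hm0 Hm1] a0 a1.
have d0 : (0 < d)%N.
  case: (boolP (0 < d)%N) => //; rewrite -eqn0Ngt => /eqP Hd.
  move: Hm1; rewrite big1 => [/eqP|i _]; first by rewrite eq_sym oner_eq0.
  by move: (ltn_ord i); rewrite {2}Hd.
pose Pn n := (n < d)%N && (alpha < \sum_(i < d | (i <= n)%N) m i).
have exP : exists n, Pn n.
  exists d.-1; apply/andP; split; first by rewrite ltn_predL.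
  rewrite (eq_bigl xpredT) ?Hm1 // => i /=.
  by rewrite -ltnS (prednK d0) ltn_ord.
case: (ex_minnP exP) => n /andP [nd Hn] Hmin.
pose s := Ordinal nd.
have Hlo : \sum_(i < d | (i < s)%N) m i <= alpha.
  case: n nd Hn Hmin @s => [|k] nd Hn Hmin /=.
    by rewrite big_pred0 // => i; rewrite ltn0.
  rewrite (eq_bigl (fun i : 'I_d => (i <= k)%N)) //.
  rewrite leNgt; apply/negP => Hk.
  have : Pn k by rewrite /Pn Hk andbT; apply: ltnW.
  by move/Hmin; rewrite ltnn.
have Hs : exists s : 'I_d, (\sum_(i < d | (i < s)%N) m i <= alpha) &&
                    (alpha < \sum_(i < d | (i <= s)%N) m i).
  by exists s; rewrite Hlo.
rewrite /s_of; case: pickP => [s' /andP [H1 H2]|Hnone].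
  by exists s'; split.
by case: Hs => s0; move: (Hnone s0) => /= ->.
Qed.

End Fin.

Theorem main_ii (R : realType) (d : nat)
  (P0 P1 : 'M[R]_d) (R0 R1 : 'I_d -> R) (alpha : R) :
  stochastic P0 -> stochastic P1 ->
  0 < alpha < 1 ->
  unichain P0 P1 ->
  strictly_indexable P0 P1 R0 R1 ->
  (forall i j : 'I_d, (i < j)%N ->
     whittle_index P0 P1 R0 R1 j < whittle_index P0 P1 R0 R1 i) ->
  (forall m : 'I_d -> R, simplex m -> phi P0 P1 alpha m = m ->
     rho_formula R0 R1 alpha m = Vrel P0 P1 R0 R1 alpha).
Proof.
move=> HP0 HP1 /andP [a0 a1] Huni [Hind _] Hord m Hm Hfix.
case: (s_of_spec Hm (ltW a0) a1) => s [Hs Hlo Hhi].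
have d0 : (0 < d)%N by apply: leq_ltn_trans (ltn_ord s).
rewrite split_le in Hhi.
set A := \sum_(i < d | (i < s)%N) m i in Hlo Hhi *.
have ms0 : 0 < m s by lra.
pose p := (alpha - A) / m s.
have Hp : m s * p = alpha - A by rewrite /p mulrC -mulrA mulVf ?mulr1 // gt_eqF.
have p0 : 0 <= p by apply: divr_ge0; lra.
have p1 : p <= 1 by rewrite /p ler_pdivrMr // mul1r; lra.
pose pol (i : 'I_d) : R := if (i < s)%N then 1 else if i == s then p else 0.
have pol_lt : forall i : 'I_d, (i < s)%N -> pol i = 1 by move=> i Hi; rewrite /pol Hi.
have pol_s : pol s = p by rewrite /pol ltnn eqxx.
have pol_gt : forall i : 'I_d, (s < i)%N -> pol i = 0.
  move=> i Hi; rewrite /pol ltnNge (ltnW Hi) /=.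
  case: eqP => // Heq; move: Hi; rewrite Heq ltnn //.
have Hv : valid_pol pol.
  by move=> i; rewrite /pol; case: ifP => _; [rewrite ler01 lexx|case: ifP => _; rewrite ?p0 ?p1 ?lexx ?ler01].
have Hdec : forall (X Y : 'I_d -> R),
    \sum_(i < d) m i * (pol i * X i + (1 - pol i) * Y i)
    = \sum_(i < d | (i < s)%N) m i * X i + (alpha - A) * X s
      + (A + m s - alpha) * Y s + \sum_(i < d | (s < i)%N) m i * Y i.
  move=> X Y; rewrite (split_all s).
  have E1 : \sum_(i < d | (i < s)%N) m i * (pol i * X i + (1 - pol i) * Y i)
          = \sum_(i < d | (i < s)%N) m i * X i.
    by apply: eq_bigr => i Hi; rewrite pol_lt // subrr mul0r addr0 mul1r.
  have E2 : \sum_(i < d | (s < i)%N) m i * (pol i * X i + (1 - pol i) * Y i)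
          = \sum_(i < d | (s < i)%N) m i * Y i.
    by apply: eq_bigr => i Hi; rewrite pol_gt // mul0r add0r subr0 mul1r.
  have E3 : m s * (pol s * X s + (1 - pol s) * Y s)
          = (alpha - A) * X s + (A + m s - alpha) * Y s.
    rewrite pol_s; transitivity ((m s * p) * X s + (m s - m s * p) * Y s); first ring.
    by rewrite Hp; ring.
  by rewrite E1 E2 E3; ring.
have Hstat : forall j, \sum_(i < d) m i * polP P0 P1 pol i j = m j.
  move=> j; under eq_bigr do rewrite mxE.
  rewrite Hdec.
  have := congr1 (fun f => f j) Hfix; rewrite /phi Hs /= -/A split_le -/A => ->.
  by [].
have Hact : \sum_(i < d) m i * pol i = alpha.
  have := Hdec (fun _ => 1) (fun _ => 0).
  rewrite (eq_bigr (fun i => m i * pol i)); last by move=> i _; ring.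
  move=> ->.
  have -> : \sum_(i < d | (s < i)%N) m i * 0 = 0 by apply: big1 => i _; rewrite mulr0.
  have -> : \sum_(i < d | (i < s)%N) m i * 1 = A by apply: eq_bigr => i _; rewrite mulr1.
  ring.
have Hrho : rho_formula R0 R1 alpha m = \sum_(i < d) m i * polR R0 R1 pol i.
  rewrite /polR Hdec /rho_formula Hs split_le -/A.
  by [].
have Hm1 := Hm.2.
have Hm0 : forall i, 0 <= m i := Hm.1.
have Hirr := irr_pol HP0 HP1 Huni Hv.
have Hst := stoch_pol HP0 HP1 Hv.
case: (at_index HP0 HP1 Huni d0 s Hind Hord) => g [h [HQ Ht Hf]].
set nu0 := whittle_index P0 P1 R0 R1 s.
have polR_nu : forall (q : 'I_d -> R) (mu : 'I_d -> R),
   \sum_(i < d) mu i * polR (fun i => R0 i + nu0) R1 q i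
   = \sum_(i < d) mu i * polR R0 R1 q i + nu0 * (\sum_(i < d) mu i - \sum_(i < d) mu i * q i).
  move=> q mu; rewrite mulrBr mulr_sumr mulr_sumr -sumrB -big_split /=.
  by apply: eq_bigr => i _; rewrite /polR; ring.
have Hg : \sum_(i < d) m i * polR R0 R1 pol i + nu0 * (1 - alpha) = g.
  rewrite -Hm1 -Hact -polR_nu.
  apply: (proj2 (duality HQ Hv Hm1 Hm0 Hstat)) => i; split => Hi.
    apply: Ht; rewrite leqNgt; apply/negP => Hsi; move: Hi; by rewrite pol_gt // eqxx.
  apply: Hf; rewrite leqNgt; apply/negP => Hsi; move: Hi; by rewrite pol_lt // eqxx.
rewrite Hrho.
set rho := \sum_(i < d) m i * polR R0 R1 pol i.
rewrite /Vrel; set S := (X in sup X).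
have HinS : S rho.
  exists pol, (i0 d0); split => //.
    by move=> y; rewrite (pol_gain HP0 HP1 Huni _ Hv Hm1 Hstat) Hact.
  by rewrite (pol_gain HP0 HP1 Huni _ Hv Hm1 Hstat).
have Hub : ubound S rho.
  move=> v [pol' [x [Hv' Hact' ->]]].
  case: (pol_stat HP0 HP1 Huni d0 Hv') => mu' [Hmp' Hm1' Hms'].
  rewrite (pol_gain HP0 HP1 Huni _ Hv' Hm1' Hms').
  have Ha' := Hact' x; rewrite (pol_gain HP0 HP1 Huni _ Hv' Hm1' Hms') in Ha'.
  have := proj1 (duality HQ Hv' Hm1' (fun i => ltW (Hmp' i)) Hms').
  rewrite polR_nu Hm1' Ha' -Hg /rho; lra.
apply/le_anti/andP; split.
  by apply: sup_upper_bound => //; split; [exists rho|exists rho].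
by apply: ge_sup => //; exists rho.
Qed.

Lemma part_i (R : realType) (d : nat) (R0 R1 : 'I_d -> R) (nu : 'I_d -> R) (alpha : R)
  (Hord : forall i j : 'I_d, (i < j)%N -> nu j < nu i)
  (a0 : 0 <= alpha) (a1 : alpha < 1)
  (N K : nat) (S : 'I_N -> 'I_d) (a : 'I_N -> bool) :
  (0 < N)%N -> K%:R = alpha * N%:R -> wip_action nu K S a ->
  inst_reward R0 R1 S a = rho_formula R0 R1 alpha (config R S).
Proof.
move=> N0 HK [Hcard Hwip].
have Nr : 0 < N%:R :> R by rewrite ltr0n.
have Hle : forall n n', a n -> ~~ a n' -> (S n <= S n')%N.
  move=> n n' Ha Hna; rewrite leqNgt; apply/negP => Hlt.
  by have := Hord _ _ Hlt; rewrite ltNge (Hwip _ _ Ha Hna).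
have Hcd : forall Q : pred 'I_N, (#|[set n | Q n]|)%:R = \sum_(n < N) (Q n)%:R :> R.
  move=> Q; rewrite -sum1_card natr_sum big_mkcond /=; apply: eq_bigr => n _.
  rewrite (_ : (n \in _) = Q n); [by case: (Q n)|exact: asboolb].
pose c (i : 'I_d) : R := (#|[set n | S n == i]|)%:R.
have fib : forall (Q : pred 'I_d) (F : 'I_N -> R),
    \sum_(i < d | Q i) \sum_(n < N | S n == i) F n = \sum_(n < N | Q (S n)) F n.
  move=> Q F; rewrite (partition_big (fun n => S n) Q) //=.
  apply: eq_bigr => j Hj; apply: eq_bigl => n.
  by case: eqP => [->|_]; [rewrite Hj|rewrite andbF].
have Hc : forall i, c i = \sum_(n < N | S n == i) 1.
  move=> i; rewrite /c Hcd [RHS]big_mkcond /=; apply: eq_bigr => n _.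
  by case: (S n == i).
have fibc : forall Q : pred 'I_d, \sum_(i < d | Q i) c i = \sum_(n < N) (Q (S n))%:R.
  move=> Q; under eq_bigr do rewrite Hc; rewrite fib big_mkcond /=.
  by apply: eq_bigr => n _; case: (Q (S n)).
have HKa : K%:R = \sum_(n < N) (a n)%:R :> R by rewrite -Hcard Hcd.
have Hsimp : simplex (config R S).
  split => [i|]; first by rewrite /config; apply: divr_ge0; apply: ler0n.
  rewrite /config -mulr_suml.
  have := fibc xpredT; rewrite /c => ->.
  rewrite (eq_bigr (fun _ => 1)) // sumr_const card_ord mulfV // gt_eqF //.
case: (s_of_spec Hsimp a0 a1) => s [Hs Hlo Hhi].
set Cl := \sum_(i < d | (i < s)%N) c i.
have HCl : \sum_(i < d | (i < s)%N) config R S i = Cl / N%:R by rewrite /Cl mulr_suml.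
have HCle : \sum_(i < d | (i <= s)%N) config R S i = (Cl + c s) / N%:R.
  by rewrite split_le HCl mulrDl.
rewrite HCl in Hlo; rewrite HCle in Hhi.
have Halpha : alpha = K%:R / N%:R by rewrite HK mulfK // gt_eqF.
rewrite Halpha ler_pM2r ?invr_gt0 // in Hlo.
rewrite Halpha ltr_pM2r ?invr_gt0 // in Hhi.
have ClA : forall n, (S n < s)%N -> a n.
  move=> n0 Hn0; apply: contraT => Hna.
  have H1 : \sum_(n < N) (a n)%:R <= \sum_(n < N) ((S n < s)%N && (n != n0))%:R :> R.
    apply: ler_sum => n _; case E: (a n) => //=.
      have := Hle _ _ E Hna => Hs'.
      have -> : (S n < s)%N by apply: leq_ltn_trans Hs' Hn0.
      by case: eqP => [Heq|//]; move: Hna; rewrite -Heq E.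
  have H2 : \sum_(n < N) ((S n < s)%N && (n != n0))%:R = Cl - 1 :> R.
    rewrite /Cl fibc (bigD1 n0) //= [in RHS](bigD1 n0) //= eqxx andbF Hn0 /=.
    rewrite add0r addrAC subrr add0r; apply: eq_bigr => n Hn; by rewrite Hn andbT.
  move: H1; rewrite -HKa H2; lra.
have ClB : forall n, (s < S n)%N -> ~~ a n.
  move=> n0 Hn0; apply/negP => Ha0.
  have H1 : \sum_(n < N) ((S n <= s)%N || (n == n0))%:R <= \sum_(n < N) (a n)%:R :> R.
    apply: ler_sum => n _; case E: (a n); first by case: (_ || _); rewrite ?ler01 ?lexx.
    case/orP: (orbN ((S n <= s)%N || (n == n0))) => Ho; last by rewrite (negbTE Ho).
    case/orP: Ho => [Hsn|/eqP Hn]; last by move: E; rewrite Hn Ha0.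
    have := Hle _ _ Ha0 (negbT E); move=> Hlt.
    by have := leq_trans Hlt Hsn; rewrite leqNgt Hn0.
  have H2 : \sum_(n < N) ((S n <= s)%N || (n == n0))%:R = Cl + c s + 1 :> R.
    rewrite -(split_le s c) fibc (bigD1 n0) //= [in RHS](bigD1 n0) //= eqxx orbT.
    rewrite leqNgt Hn0 /= add0r addrC; congr (_ + _); apply: eq_bigr => n Hn.
    by rewrite (negbTE Hn) orbF.
  move: H1; rewrite -HKa H2; lra.
pose G n := if a n then R1 (S n) else R0 (S n).
set As := \sum_(n < N | S n == s) (a n)%:R : R.
have HKs : K%:R = Cl + As :> R.
  rewrite HKa (partition_big (fun n => S n) xpredT) //= (split_all s) /=.
  rewrite [X in _ + X](_ : _ = 0); last first.
    apply: big1 => i Hi; apply: big1 => n /eqP Hn.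
    by rewrite (negbTE (ClB n _)) //; rewrite Hn.
  rewrite addr0; congr (_ + _); rewrite /Cl; apply: eq_bigr => i Hi.
  rewrite Hc; apply: eq_bigr => n /eqP Hn; by rewrite ClA // Hn.
have Hrew : \sum_(n < N) G n = \sum_(i < d | (i < s)%N) c i * R1 i
     + (As * R1 s + (c s - As) * R0 s) + \sum_(i < d | (s < i)%N) c i * R0 i.
  rewrite (partition_big (fun n => S n) xpredT) //= (split_all s) /=.
  congr (_ + _ + _).
  - apply: eq_bigr => i Hi; rewrite Hc mulr_suml; apply: eq_bigr => n /eqP Hn.
    by rewrite /G ClA ?Hn // mul1r.
  - rewrite Hc /As -sumrB !mulr_suml -big_split /=.
    apply: eq_bigr => n /eqP Hn; rewrite /G Hn; case: (a n) => /=; ring.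
  - apply: eq_bigr => i Hi; rewrite Hc mulr_suml; apply: eq_bigr => n /eqP Hn.
    by rewrite /G (negbTE (ClB n _)) ?Hn // mul1r.
rewrite /inst_reward -/G Hrew /rho_formula Hs HCl HCle.
have E1 : \sum_(i < d | (i < s)%N) config R S i * R1 i
        = N%:R^-1 * \sum_(i < d | (i < s)%N) c i * R1 i.
  by rewrite mulr_sumr; apply: eq_bigr => i _; rewrite /config; ring.
have E2 : \sum_(i < d | (s < i)%N) config R S i * R0 i
        = N%:R^-1 * \sum_(i < d | (s < i)%N) c i * R0 i.
  by rewrite mulr_sumr; apply: eq_bigr => i _; rewrite /config; ring.
rewrite E1 E2 Halpha HKs; ring.
Qed.

Theorem mainTheorem7 (R : realType) (d : nat)
  (P0 P1 : 'M[R]_d) (R0 R1 : 'I_d -> R) (alpha : R) :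
  stochastic P0 -> stochastic P1 ->
  0 < alpha < 1 ->
  unichain P0 P1 ->
  strictly_indexable P0 P1 R0 R1 ->
  (* states are labelled so that nu_1 > nu_2 > ... > nu_d *)
  (forall i j : 'I_d, (i < j)%N ->
     whittle_index P0 P1 R0 R1 j < whittle_index P0 P1 R0 R1 i) ->
  (* (i) the WIP reward in any configuration of any N-bandit system *)
  (forall (N K : nat) (S : 'I_N -> 'I_d) (a : 'I_N -> bool),
     (0 < N)%N -> K%:R = alpha * N%:R ->
     wip_action (whittle_index P0 P1 R0 R1) K S a ->
     inst_reward R0 R1 S a = rho_formula R0 R1 alpha (config R S))
  /\
  (* (ii) at the fixed point m* of phi *)
  (forall m : 'I_d -> R, simplex m -> phi P0 P1 alpha m = m ->
     rho_formula R0 R1 alpha m = Vrel P0 P1 R0 R1 alpha).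
Proof.
move=> HP0 HP1 Ha Huni Hsi Hord; split.
  move=> N K S a N0 HK Hw; case/andP: Ha => a0 a1.
  exact: (part_i R0 R1 Hord (ltW a0) a1 N0 HK Hw).
exact: main_ii HP0 HP1 Ha Huni Hsi Hord.
Qed.
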